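(* Let $X=\{a,\dots,b\}\subseteq\mathbb{N}$, let $f^p:\mathcal{P}^n\to X$ be a generalized median voter scheme with monotonic family of fixed ballots $p=\{p_S\}_{S\subseteq N}$, and let $i\in N$. (i) If $p_{N\setminus\{i\}}\le p_{\{i\}}$, then $x\in V_i$ if and only if $x<p_{N\setminus\{i\}}$ or $x>p_{\{i\}}$. (ii) If $p_{\{i\}}<p_{N\setminus\{i\}}$, then $V_i=X$.
   Context: $N=\{1,\dots,n\}$, $n\ge2$; $X=\{a,a+1,\dots,b\}$, $|X|\ge2$; $\mathcal{P}$ all strict linear orders on $X$; $t(P_i)$ the top of $P_i$. A monotonic family of fixed ballots: $p_S\in X$ for all $S\subseteq N$, $p_N=a$, $p_\emptyset=b$, and $T\subseteq Q$ implies $p_Q\le p_T$. $f^p(P)=\min_{S\subseteq N}\max_{j\in S}\{t(P_j),p_S\}$. Option set $O(P_i)=\{f^p(P_i,P_{-i}):P_{-i}\in\mathcal{P}^{n-1}\}$. Agent $i$ vetoes $x$ via $P_i$ if $x\notin O(P_i)$; $V_i$ is the set of alternatives $i$ vetoes via some preference. *)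

(* Defs.v *)
From mathcomp Require Import all_boot.
Set Implicit Arguments. Unset Strict Implicit. Unset Printing Implicit Defensive.

(* Agents N = {1,...,n} are encoded as 'I_n.
   Alternatives X = {a,...,b} are encoded as alt a b := 'I_(b - a).+1,
   the ordinal k standing for the natural number a + k (order-preserving). *)
Definition alt (a b : nat) : finType := 'I_(b - a).+1.
Definition altv (a b : nat) (x : alt a b) : nat := a + nat_of_ord x.

Definition strict_linear (T : finType) (R : rel T) : Prop :=
  [/\ forall x, ~~ R x x,
      forall x y z, R x y -> R y z -> R x z
    & forall x y, x != y -> R x y || R y x].

Definition top (a b : nat) (P : rel (alt a b)) : alt a b :=
  odflt ord0 [pick x | [forall y, (y != x) ==> P x y]].

Definition monotonic_ballots (n a b : nat) (p : {set 'I_n} -> nat) : Prop :=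
  [/\ forall S, a <= p S <= b,
      p setT = a,
      p set0 = b
    & forall S Q : {set 'I_n}, S \subset Q -> p Q <= p S].

Definition gmvs (n a b : nat) (p : {set 'I_n} -> nat)
    (P : 'I_n -> rel (alt a b)) : nat :=
  \big[minn/b]_(S : {set 'I_n})
     maxn (p S) (\max_(j in S) altv (top (P j))).

Definition option_set (n a b : nat) (p : {set 'I_n} -> nat) (i : 'I_n)
    (Pi : rel (alt a b)) (x : alt a b) : Prop :=
  exists Pm : 'I_n -> rel (alt a b),
    (forall j, j != i -> strict_linear (Pm j)) /\
    gmvs p (fun j => if j == i then Pi else Pm j) = altv x.

Definition vetoed (n a b : nat) (p : {set 'I_n} -> nat) (i : 'I_n)
    (x : alt a b) : Prop :=
  exists Pi : rel (alt a b), strict_linear Pi /\ ~ option_set p i Pi x.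

(* Main.v *)
Require Import Defs.
From mathcomp Require Import all_boot.
From mathcomp Require Import zify.

Section Aux.
Variables (a b : nat).

Definition rk (x y : alt a b) : nat := if y == x then 0 else (nat_of_ord y).+1.
Definition lin (x : alt a b) : rel (alt a b) := fun y z => rk x y < rk x z.

Lemma rk_inj x : injective (rk x).
Proof.
move=> y z; rewrite /rk.
case: eqP => [->|hy]; case: eqP => [->|hz] //= H; try by [].
by apply/val_inj; case: H.
Qed.

Lemma lin_strict x : strict_linear (lin x).
Proof.
split; rewrite /lin.
- by move=> y; rewrite ltnn.
- by move=> y z w; apply: ltn_trans.
- move=> y z hyz; rewrite -neq_ltn; apply/negP => /eqP /rk_inj E.
  by rewrite E eqxx in hyz.
Qed.

Lemma top_unique (P : rel (alt a b)) x :
  strict_linear P -> (forall y, y != x -> P x y) -> top P = x.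
Proof.
case=> irr tr _ hx; rewrite /top.
case: pickP => [z /forallP hz | /(_ x) H] /=.
- case: (eqVneq z x) => // hzx.
  have h1 := implyP (hz x) (negbT (introF eqP (fun e => (negP hzx) (introT eqP (esym e))))).
  have h2 := hx z hzx.
  by have := irr z; rewrite (tr _ _ _ h1 h2).
- exfalso; move: H; have -> : [forall y, (y != x) ==> P x y] = true.
    by apply/forallP => y; apply/implyP; apply: hx.
  by [].
Qed.

Lemma top_lin x : top (lin x) = x.
Proof.
apply: top_unique; first exact: lin_strict.
by move=> y hy; rewrite /lin /rk eqxx (negbTE hy).
Qed.

Lemma altv_le (x : alt a b) : a < b -> altv x <= b.
Proof. move=> hab; rewrite /altv; have := ltn_ord x; lia. Qed.

End Aux.
Arguments rk {a b}.
Arguments lin {a b}.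
Arguments top_lin {a b}.

Lemma bigmin_le_seq (I : eqType) (r : seq I) (F : I -> nat) b j :
  j \in r -> \big[minn/b]_(i <- r) F i <= F j.
Proof.
elim: r => // h t ih; rewrite inE big_cons => /orP [/eqP ->|jt].
- exact: geq_minl.
- exact: leq_trans (geq_minr _ _) (ih jt).
Qed.

Lemma bigmin_le (I : finType) (F : I -> nat) b j : \big[minn/b]_(i : I) F i <= F j.
Proof. exact: bigmin_le_seq (mem_index_enum j). Qed.

Lemma bigmin_ge (I : finType) (F : I -> nat) b c :
  c <= b -> (forall i, c <= F i) -> c <= \big[minn/b]_(i : I) F i.
Proof.
move=> cb hF; elim/big_ind: _ => // u v hu hv.
by rewrite leq_min hu hv.
Qed.

Section Main.
Variables (n a b : nat) (p : {set 'I_n} -> nat) (i : 'I_n).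
Hypothesis hab : a < b.
Hypothesis hp : monotonic_ballots a b p.

Lemma gm_upper (Q : 'I_n -> rel (alt a b)) :
  gmvs p Q <= maxn (p [set i]) (altv (top (Q i))).
Proof.
rewrite /gmvs; apply: leq_trans (bigmin_le _ _ _ [set i]) _.
rewrite geq_max leq_maxl /=; apply/bigmax_leqP => j; rewrite inE => /eqP ->.
exact: leq_maxr.
Qed.

Lemma gm_lower (Q : 'I_n -> rel (alt a b)) :
  minn (p (~: [set i])) (altv (top (Q i))) <= gmvs p Q.
Proof.
case: hp => hpb _ _ hmon.
rewrite /gmvs; apply: bigmin_ge.
  by apply: leq_trans (geq_minl _ _) _; case/andP: (hpb (~: [set i])).
move=> S; case: (boolP (i \in S)) => hi.
- apply: leq_trans (geq_minr _ _) _; apply: leq_trans (leq_maxr _ _).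
  exact: (leq_bigmax_cond i hi).
- apply: leq_trans (geq_minl _ _) _; apply: leq_trans (leq_maxl _ _).
  apply: hmon; apply/subsetP => j hj; rewrite !inE; apply/eqP => E.
  by rewrite -E hj in hi.
Qed.

Lemma gm_reach (Pi : rel (alt a b)) (x : alt a b) :
  p (~: [set i]) <= altv x -> altv x <= p [set i] ->
  gmvs p (fun j => if j == i then Pi else lin x) = altv x.
Proof.
move=> h1 h2; case: hp => hpb _ hp0 hmon.
apply/eqP; rewrite eqn_leq; apply/andP; split.
- rewrite /gmvs; apply: leq_trans (bigmin_le _ _ _ (~: [set i])) _.
  rewrite geq_max h1 /=; apply/bigmax_leqP => j; rewrite !inE => hj.
  by rewrite (negbTE hj) top_lin.
- rewrite /gmvs; apply: bigmin_ge; first exact: altv_le.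
  move=> S; case: (boolP [exists j in S, j != i]).
  + case/existsP => j /andP [jS ji]; apply: leq_trans (leq_maxr _ _).
    apply: leq_trans (leq_bigmax_cond j jS); rewrite (negbTE ji) top_lin //.
  + move=> /existsPn H; apply: leq_trans (leq_maxl _ _).
    apply: leq_trans h2 _; apply: hmon; apply/subsetP => j hj.
    have := H j; rewrite hj /= negbK => /eqP ->; by rewrite inE.
Qed.

Lemma veto_low (x : alt a b) : altv x < p (~: [set i]) -> vetoed p i x.
Proof.
move=> hx; exists (lin ord_max); split; first exact: lin_strict.
case=> Pm [_ E]; have := gm_lower (fun j => if j == i then lin ord_max else Pm j).
rewrite E eqxx top_lin /altv /=.
case: hp => hpb _ _ _; case/andP: (hpb (~: [set i])) => _ hb.
move: hx; rewrite /altv; lia.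
Qed.

Lemma veto_high (x : alt a b) : p [set i] < altv x -> vetoed p i x.
Proof.
move=> hx; exists (lin ord0); split; first exact: lin_strict.
case=> Pm [_ E]; have := gm_upper (fun j => if j == i then lin ord0 else Pm j).
rewrite E eqxx top_lin /altv /=.
case: hp => hpb _ _ _; case/andP: (hpb [set i]) => ha _.
move: hx; rewrite /altv; lia.
Qed.

End Main.

Theorem lemma2 (n a b : nat) (p : {set 'I_n} -> nat) (i : 'I_n) :
  1 < n -> a < b -> monotonic_ballots a b p ->
  (p (~: [set i]) <= p [set i] ->
     forall x : alt a b,
       vetoed p i x <-> (altv x < p (~: [set i]) \/ p [set i] < altv x)) /\
  (p [set i] < p (~: [set i]) -> forall x : alt a b, vetoed p i x).
Proof.
move=> hn hab hp; split.
- move=> hle x; split.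
  + case=> Pi [_ hno].
    case: (ltnP (altv x) (p (~: [set i]))) => h1; first by left.
    case: (ltnP (p [set i]) (altv x)) => h2; first by right.
    exfalso; apply: hno; exists (fun _ => lin x); split.
      by move=> j _; exact: lin_strict.
    exact: gm_reach.
  + by case=> h; [apply: veto_low | apply: veto_high].
- move=> hlt x.
  case: (ltnP (altv x) (p (~: [set i]))) => h1; first exact: veto_low.
  apply: veto_high => //; exact: leq_trans hlt h1.
Qed.
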